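(* Let $r$ be factorizable, $n\ge1$, $\tilde r=r^{(n)}$, and $\tilde{\mathfrak f}_\pm=\mathrm{Im}(\tilde r_\pm)\subset\mathfrak g^n$. If $n=2m$ is even, then $$\tilde{\mathfrak f}_+=\tau(\mathfrak l_r\oplus\underbrace{\mathfrak g_{\rm diag}\oplus\cdots\oplus\mathfrak g_{\rm diag}}_{m-1}),\qquad\tilde{\mathfrak f}_-=\underbrace{\mathfrak g_{\rm diag}\oplus\cdots\oplus\mathfrak g_{\rm diag}}_{m};$$ if $n=2m+1$ is odd, then $$\tilde{\mathfrak f}_+=\mathfrak f_+\oplus\underbrace{\mathfrak g_{\rm diag}\oplus\cdots\oplus\mathfrak g_{\rm diag}}_{m},\qquad\tilde{\mathfrak f}_-=\underbrace{\mathfrak g_{\rm diag}\oplus\cdots\oplus\mathfrak g_{\rm diag}}_{m}\oplus\mathfrak f_-.$$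
   Context: $\mathfrak g$ is a Lie algebra, $r=\sum_ix_i\otimes y_i\in\mathfrak g\otimes\mathfrak g$ a quasitriangular $r$-matrix ($r+r^{21}$ ad-invariant, classical Yang–Baxter equation holds), factorizable meaning $r+r^{21}$ nondegenerate. For any such tensor $s=\sum a_j\otimes b_j$ on a Lie algebra, $s_+(\xi)=\sum_j\langle\xi,a_j\rangle b_j$ and $s_-(\xi)=-\sum_j\langle\xi,b_j\rangle a_j$. $\mathfrak f_\pm=\mathrm{Im}\,r_\pm$; $r^\flat_\pm=r_\pm\circ(r_+-r_-)^{-1}$; $\mathfrak l_r=\{(r^\flat_+(x),r^\flat_-(x)):x\in\mathfrak g\}\subset\mathfrak g\oplus\mathfrak g$; $\mathfrak g_{\rm diag}=\{(x,x)\}\subset\mathfrak g\oplus\mathfrak g$. On $\mathfrak g^n=\mathfrak g\oplus\cdots\oplus\mathfrak g$, for $X\in\mathfrak g^{\otimes l}$ let $(X)_j$ be its image under the embedding of $\mathfrak g$ as the $j$-th summand, and $$r^{(n)}=\sum_{j\ \mathrm{odd}}(r)_j+\sum_{j\ \mathrm{even}}(-r^{21})_j-\sum_{1\le j<k\le n}\sum_i(y_i)_j\wedge(x_i)_k,$$ with $a\wedge b=a\otimes b-b\otimes a$. $\tau$ is the automorphism of $\mathfrak g^n$ given by $\tau(x_1,x_2,x_3,\ldots,x_{n-1},x_n)=(x_1,x_3,\ldots,x_{n-1},x_n,x_2)$, where $\mathfrak l_r\oplus\mathfrak g_{\rm diag}^{m-1}$ is viewed in $\mathfrak g^n$ in the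 obvious order. *)

(* Defs.v *)
(* Finite-dimensional Lie algebra g over a field K, realised
   as g = K^d (row vectors 'rV[K]_d); the dual g^* is identified with K^d
   through the dual basis, so <xi, x> = xi *m x^T. *)
From HB Require Import structures.
From mathcomp Require Import all_boot all_order all_algebra.
Set Implicit Arguments. Unset Strict Implicit. Unset Printing Implicit Defensive.
Import Order.TTheory GRing.Theory Num.Theory.
Local Open Scope ring_scope.

Section LieDefs.
Variables (K : fieldType) (d : nat).

Definition ebasis (a : 'I_d) : 'rV[K]_d := delta_mx 0 a.

Definition is_lie (br : 'rV[K]_d -> 'rV[K]_d -> 'rV[K]_d) : Prop :=
  [/\ (forall (c : K) x y z, br (c *: x + y) z = c *: br x z + br y z),
      (forall (c : K) x y z, br z (c *: x + y) = c *: br z x + br z y),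
      (forall x, br x x = 0) &
      (forall x y z, br x (br y z) + br y (br z x) + br z (br x y) = 0)].

(* g (x) g is represented by d x d matrices: t a b is the coefficient of
   e_a (x) e_b.  The pure tensor x (x) y is x^T *m y. *)
Definition tpure (x y : 'rV[K]_d) : 'M[K]_d := x^T *m y.
Definition tflip (t : 'M[K]_d) : 'M[K]_d := t^T.

Definition ad2 br (x : 'rV[K]_d) (t : 'M[K]_d) : 'M[K]_d :=
  \sum_(a < d) \sum_(b < d)
     t a b *: (tpure (br x (ebasis a)) (ebasis b) + tpure (ebasis a) (br x (ebasis b))).

Definition ad_invariant br (t : 'M[K]_d) : Prop := forall x, ad2 br x t = 0.

Definition pure3 (u v w : 'rV[K]_d) (p q s : 'I_d) : K := u 0 p * v 0 q * w 0 s.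

(* classical Yang-Baxter equation [r12,r13] + [r12,r23] + [r13,r23] = 0 for
   r = sum_{a,b} r_ab e_a (x) e_b, written coefficientwise in g(x)g(x)g *)
Definition cybe br (r : 'M[K]_d) : Prop :=
  forall p q s : 'I_d,
    \sum_(a < d) \sum_(b < d) \sum_(a' < d) \sum_(b' < d)
      r a b * r a' b' *
       (pure3 (br (ebasis a) (ebasis a')) (ebasis b) (ebasis b') p q s
      + pure3 (ebasis a) (br (ebasis b) (ebasis a')) (ebasis b') p q s
      + pure3 (ebasis a) (ebasis a') (br (ebasis b) (ebasis b')) p q s) = 0.

Definition quasitriangular br (r : 'M[K]_d) : Prop :=
  ad_invariant br (r + tflip r) /\ cybe br r.

Definition factorizable br (r : 'M[K]_d) : Prop :=
  quasitriangular br r /\ r + tflip r \in unitmx.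

(* s_+(xi) = sum_j <xi,a_j> b_j  and  s_-(xi) = - sum_j <xi,b_j> a_j
   for s = sum_j a_j (x) b_j, i.e. s = sum_j a_j^T *m b_j *)
Definition splus (s : 'M[K]_d) (xi : 'rV[K]_d) : 'rV[K]_d := xi *m s.
Definition sminus (s : 'M[K]_d) (xi : 'rV[K]_d) : 'rV[K]_d := - (xi *m s^T).

(* (r_+ - r_-)(xi) = xi *m (r + r^T); its inverse (r invertible case) is
   x |-> x *m invmx (r + r^T). *)
Definition rdiff_inv (r : 'M[K]_d) (x : 'rV[K]_d) : 'rV[K]_d :=
  x *m invmx (r + tflip r).
Definition rflat_plus (r : 'M[K]_d) (x : 'rV[K]_d) := splus r (rdiff_inv r x).
Definition rflat_minus (r : 'M[K]_d) (x : 'rV[K]_d) := sminus r (rdiff_inv r x).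

Definition l_r (r : 'M[K]_d) (x y : 'rV[K]_d) : Prop :=
  exists z, x = rflat_plus r z /\ y = rflat_minus r z.

Definition img {A B : Type} (f : A -> B) (y : B) : Prop := exists x, y = f x.
Definition img_on {A B : Type} (f : A -> B) (S : A -> Prop) (y : B) : Prop :=
  exists x, S x /\ y = f x.

Variable n : nat.
(* g^n : row j (j : 'I_n) of X : 'M_(n,d) is the j-th component;
   dual (g^n)^* likewise, with pairing sum_j <xi_j, x_j>. *)

(* g^n (x) g^n: block matrix, block (j,k) in g (x) g is the component in
   (g)_j (x) (g)_k *)
Definition tens := 'M['M[K]_d]_n.

Definition embT (j k : 'I_n) (X : 'M[K]_d) : tens :=
  \matrix_(p, q) (if (p == j) && (q == k) then X else 0).
Definition emb2 (j : 'I_n) (X : 'M[K]_d) : tens := embT j j X.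
Definition tpure_n (j : 'I_n) (u : 'rV[K]_d) (k : 'I_n) (v : 'rV[K]_d) : tens :=
  embT j k (tpure u v).
Definition wedge_n j u k v : tens := tpure_n j u k v - tpure_n k v j u.

(* r^{(n)}, with r = sum_{a,b} (r_ab e_a) (x) e_b, i.e. x_i = r_ab e_a,
   y_i = e_b.  Indices are 0-based: the paper's odd j (1-based) are the
   even ordinals j. *)
Definition rn (r : 'M[K]_d) : tens :=
  \sum_(j < n) emb2 j (if ~~ odd j then r else - tflip r)
  - \sum_(j < n) \sum_(k < n | (j < k)%N) \sum_(a < d) \sum_(b < d)
      wedge_n j (ebasis b) k (r a b *: ebasis a).

Definition tn_plus (T : tens) (xi : 'M[K]_(n, d)) : 'M[K]_(n, d) :=
  \matrix_(k < n) (\sum_(j < n) row j xi *m T j k).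
Definition tn_minus (T : tens) (xi : 'M[K]_(n, d)) : 'M[K]_(n, d) :=
  \matrix_(j < n) (- \sum_(k < n) row k xi *m (T j k)^T).

(* tau(x_1,x_2,x_3,...,x_n) = (x_1,x_3,...,x_n,x_2)   (0-based indices) *)
Definition tau_idx (k : nat) : nat :=
  if k == 0%N then 0%N else if k == n.-1 then 1%N else k.+1.
Definition tau (X : 'M[K]_(n, d)) : 'M[K]_(n, d) :=
  \matrix_(k < n) row (insubd k (tau_idx k)) X.

(* the components are paired diagonally starting at (0-based) index s:
   x_s = x_{s+1}, x_{s+2} = x_{s+3}, ...  (for every such pair inside g^n) *)
Definition diag_from (s : nat) (X : 'M[K]_(n, d)) : Prop :=
  forall i j : 'I_n, (s <= i)%N -> ~~ odd (i - s) -> val j = i.+1 ->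
    row i X = row j X.

Definition lr_diag (r : 'M[K]_d) (X : 'M[K]_(n, d)) : Prop :=
  (forall i j : 'I_n, val i = 0%N -> val j = 1%N -> l_r r (row i X) (row j X))
  /\ diag_from 2 X.

Definition fplus_diag (r : 'M[K]_d) (X : 'M[K]_(n, d)) : Prop :=
  (forall i : 'I_n, val i = 0%N -> img (splus r) (row i X)) /\ diag_from 1 X.
Definition diag_fminus (r : 'M[K]_d) (X : 'M[K]_(n, d)) : Prop :=
  diag_from 0 X /\ (forall i : 'I_n, val i = n.-1 -> img (sminus r) (row i X)).

End LieDefs.

(* Main.v *)
Require Import Defs.
From HB Require Import structures.
From mathcomp Require Import all_boot all_order all_algebra zify.
Set Implicit Arguments. Unset Strict Implicit. Unset Printing Implicit Defensive.
Import Order.TTheory GRing.Theory Num.Theory.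
Local Open Scope ring_scope.

Section Aux.
Variables (K : fieldType) (d n : nat) (r : 'M[K]_d).

Lemma embT_add (j k : 'I_n) (X Y : 'M[K]_d) :
  embT j k (X + Y) = embT j k X + embT j k Y.
Proof. by apply/matrixP=> p q; rewrite !mxE; case: ifP; rewrite ?addr0. Qed.

Lemma embT0 (j k : 'I_n) : embT j k (0 : 'M[K]_d) = 0.
Proof. by apply/matrixP=> p q; rewrite !mxE; case: ifP. Qed.

Lemma embT_sum (j k : 'I_n) (I : Type) (s : seq I) (P : pred I) (F : I -> 'M[K]_d) :
  \sum_(i <- s | P i) embT j k (F i) = embT j k (\sum_(i <- s | P i) F i).
Proof. by rewrite (big_morph (embT j k) (embT_add j k) (embT0 j k)). Qed.

Lemma sum_tp1 : \sum_(a < d) \sum_(b < d) tpure (ebasis K b) (r a b *: ebasis K a) = r^T.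
Proof.
apply/matrixP=> p q; rewrite summxE (bigD1 q) //= [X in _ + X]big1 ?addr0; last first.
  move=> a; rewrite eq_sym => /negbTE aq; rewrite summxE big1 // => b _.
  by rewrite /tpure /ebasis -scalemxAr trmx_delta mul_delta_mx !mxE aq andbF mulr0.
rewrite summxE (bigD1 p) //= [X in _ + X]big1 ?addr0; last first.
  move=> b; rewrite eq_sym => /negbTE bp; 
  by rewrite /tpure /ebasis -scalemxAr trmx_delta mul_delta_mx !mxE bp mulr0.
by rewrite /tpure /ebasis -scalemxAr trmx_delta mul_delta_mx !mxE !eqxx mulr1.
Qed.

Lemma sum_tp2 : \sum_(a < d) \sum_(b < d) tpure (r a b *: ebasis K a) (ebasis K b) = r.
Proof.
apply/matrixP=> p q; rewrite summxE (bigD1 p) //= [X in _ + X]big1 ?addr0; last first.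
  move=> a; rewrite eq_sym => /negbTE aq; rewrite summxE big1 // => b _.
  by rewrite /tpure /ebasis linearZ /= -scalemxAl trmx_delta mul_delta_mx !mxE aq mulr0.
rewrite summxE (bigD1 q) //= [X in _ + X]big1 ?addr0; last first.
  move=> b; rewrite eq_sym => /negbTE bp; 
  by rewrite /tpure /ebasis linearZ /= -scalemxAl trmx_delta mul_delta_mx !mxE bp andbF mulr0.
by rewrite /tpure /ebasis linearZ /= -scalemxAl trmx_delta mul_delta_mx !mxE !eqxx mulr1.
Qed.

End Aux.
Lemma wedge_sum (K : fieldType) d n (r : 'M[K]_d) (j k : 'I_n) : \sum_(a < d) \sum_(b < d) wedge_n j (ebasis K b) k (r a b *: ebasis K a) = embT j k r^T - embT k j r.
Proof.
rewrite /wedge_n /tpure_n. under eq_bigr do rewrite sumrB.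
rewrite sumrB. under eq_bigr do rewrite embT_sum. rewrite embT_sum sum_tp1.
under eq_bigr do rewrite embT_sum. by rewrite embT_sum sum_tp2.
Qed.

Lemma L1 (V : zmodType) n (j k : 'I_n) (M : V) :
  \sum_(k0 < n) \sum_(i < n | (k0 < i)%N) (if (j == k0) && (k == i) then M else 0)
  = if (j < k)%N then M else 0.
Proof.
rewrite (bigD1 j) //= [X in _ + X]big1 ?addr0; last first.
  by move=> k0; rewrite eq_sym => /negbTE ->; rewrite big1.
rewrite eqxx /=; case: ifP => jk.
  rewrite (bigD1 k) //= eqxx big1 ?addr0 //.
  by move=> i /andP [_]; rewrite eq_sym => /negbTE ->.
by rewrite big1 // => i ji; case: eqP => // ki; move: ji; rewrite -ki jk.
Qed.

Lemma L2 (V : zmodType) n (j k : 'I_n) (M : V) :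
  \sum_(k0 < n) \sum_(i < n | (k0 < i)%N) (if (j == i) && (k == k0) then M else 0)
  = if (k < j)%N then M else 0.
Proof.
rewrite (bigD1 k) //= [X in _ + X]big1 ?addr0; last first.
  by move=> k0; rewrite eq_sym => /negbTE ->; rewrite big1 // => i _; rewrite andbF.
rewrite eqxx /=; case: ifP => jk.
  rewrite (bigD1 j) //= eqxx big1 ?addr0 //.
  by move=> i /andP [_]; rewrite eq_sym => /negbTE ->.
by rewrite big1 // => i ji; rewrite andbT; case: eqP => // ki; move: ji; rewrite -ki jk.
Qed.

Lemma rn_entry (K : fieldType) d n (r : 'M[K]_d) (j k : 'I_n) :
  rn n r j k = if (j < k + odd k)%N then - r^T else r.
Proof.
rewrite /rn. under [X in _ - X]eq_bigr do under eq_bigr do rewrite wedge_sum.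
rewrite !mxE !summxE.
under [X in _ - X]eq_bigr do rewrite summxE.
under [X in _ - X]eq_bigr do under eq_bigr do rewrite !mxE.
under [X in _ - X]eq_bigr do rewrite sumrB.
rewrite sumrB L1 L2.
under eq_bigr do rewrite !mxE.
rewrite (bigD1 j) //= [X in _ + X - _]big1 ?addr0; last first.
  by move=> k0; rewrite eq_sym => /negbTE ->.
rewrite eqxx /= /tflip.
case: (ltngtP j k) => jk.
- rewrite (_ : (k == j) = false); last by apply/negbTE; rewrite neq_ltn jk orbT.
  rewrite sub0r subr0 ifT //.
  by apply: (leq_trans jk); apply: leq_addr.
- rewrite (_ : (k == j) = false); last by apply/negbTE; rewrite neq_ltn jk.
  rewrite !sub0r opprK ifF //.
  apply/negbTE; rewrite -leqNgt; apply: leq_trans jk.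
  by rewrite -addn1 leq_add2l leq_b1.
- have -> : j = k by apply: val_inj.
  rewrite eqxx !subr0.
  by case: (odd k) => /=; rewrite ?addn1 ?ltnSn ?addn0 ?ltnn.
Qed.
Lemma cond_equiv (j k : nat) : (j < k + odd k)%N = ~~ (k < j + ~~ odd j)%N.
Proof.
rewrite -leqNgt; case: (ltngtP j k) => [jk|kj|->].
- by case: (odd j) (odd k) => [] [] /=; lia.
- by case: (odd j) (odd k) => [] [] /=; lia.
- by case: (odd k) => /=; lia.
Qed.

Section Rows.
Variables (K : fieldType) (d n : nat) (r : 'M[K]_d).
Local Notation t := (r + r^T).

Lemma plus_row (xi : 'M[K]_(n, d)) (k : 'I_n) :
  row k (tn_plus (rn n r) xi) =
  (\sum_(j < n) row j xi) *m r - (\sum_(j < n | (j < k + odd k)%N) row j xi) *m t.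
Proof.
rewrite rowK. under eq_bigr do rewrite rn_entry.
rewrite [X in _ - X *m _]big_mkcond /= !mulmx_suml -sumrB; apply: eq_bigr => j _.
case: ifP => _; last by rewrite mul0mx subr0.
by rewrite mulmxDr opprD addrA subrr sub0r mulmxN.
Qed.

Lemma minus_row (xi : 'M[K]_(n, d)) (j : 'I_n) :
  row j (tn_minus (rn n r) xi) =
  (\sum_(k < n) row k xi) *m r - (\sum_(k < n | (k < j + ~~ odd j)%N) row k xi) *m t.
Proof.
rewrite rowK. under eq_bigr do rewrite rn_entry.
rewrite -sumrN [X in _ - X *m _]big_mkcond /= !mulmx_suml -sumrB; apply: eq_bigr => k _.
rewrite cond_equiv; case: (k < _)%N => /=.
  by rewrite mulmxDr opprD addrA subrr sub0r.
by rewrite mul0mx subr0 linearN /= trmxK mulmxN opprK.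
Qed.

Lemma psum_full (xi : 'M[K]_(n, d)) c : (n <= c)%N ->
  \sum_(j < n | (j < c)%N) row j xi = \sum_(j < n) row j xi.
Proof. move=> nc; apply: eq_bigl => j; exact: (leq_trans (ltn_ord j) nc). Qed.

Lemma psum0 (xi : 'M[K]_(n, d)) : \sum_(j < n | (j < 0)%N) row j xi = 0.
Proof. by rewrite big_pred0. Qed.

Definition mkxi (P : nat -> 'rV[K]_d) : 'M[K]_(n, d) := \matrix_(j < n) (P j.+1 - P j).

Lemma psum_mkxi (P : nat -> 'rV[K]_d) c : P 0%N = 0 -> (c <= n)%N ->
  \sum_(j < n | (j < c)%N) row j (mkxi P) = P c.
Proof.
move=> P0 cn.
under eq_bigr do rewrite rowK.
rewrite -(big_ord_widen _ (fun j => P j.+1 - P j) cn).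
rewrite -(big_mkord xpredT (fun i => P i.+1 - P i)).
by rewrite telescope_sumr // P0 subr0.
Qed.

Lemma sum_mkxi (P : nat -> 'rV[K]_d) : P 0%N = 0 ->
  \sum_(j < n) row j (mkxi P) = P n.
Proof. by move=> P0; rewrite -(psum_full _ (leqnn n)) psum_mkxi. Qed.

End Rows.

Lemma par k : exists q, k = (2*q + odd k)%N.
Proof. exists k./2; have := odd_double_half k; lia. Qed.

Section Main.
Variables (K : fieldType) (d n : nat) (r : 'M[K]_d).
Local Notation t := (r + r^T).
Local Notation T := (rn n r).

Lemma subt (w : 'rV[K]_d) : w *m r - w *m t = - (w *m r^T).
Proof. by rewrite mulmxDr opprD addrA subrr sub0r. Qed.

Definition rown (X : 'M[K]_(n, d)) (c : nat) : 'rV[K]_d :=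
  \sum_(i < n | val i == c) row i X.

Lemma rownE X (i : 'I_n) : rown X i = row i X.
Proof. by rewrite /rown (eq_bigl (fun j => j == i)) ?big_pred1_eq. Qed.

Lemma rownO X c (h : (c < n)%N) : rown X c = row (Ordinal h) X.
Proof. by rewrite -rownE. Qed.

Lemma rown_insubd X (k : 'I_n) c : (c < n)%N -> row (insubd k c) X = rown X c.
Proof. by move=> h; rewrite -rownE insubdK. Qed.

Lemma G1 xi (i j : 'I_n) : ~~ odd i -> val j = i.+1 ->
  row i (tn_minus T xi) = row j (tn_minus T xi).
Proof.
move=> oi ji; rewrite !minus_row.
have -> : (j + ~~ odd j)%N = (i + ~~ odd i)%N.
  by rewrite ji /=; move: oi; case: (odd i) => //= _; rewrite addn0 addn1.
by [].
Qed.

Lemma G2 xi (i j : 'I_n) : odd i -> val j = i.+1 ->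
  row i (tn_plus T xi) = row j (tn_plus T xi).
Proof.
move=> oi ji; rewrite !plus_row.
have -> : (j + odd j)%N = (i + odd i)%N.
  by rewrite ji /= oi /= addn0 addn1.
by [].
Qed.

Lemma G3 xi (k : 'I_n) : val k = 0%N ->
  row k (tn_plus T xi) = (\sum_(j < n) row j xi) *m r.
Proof.
move=> k0; have {}k0 : (k : nat) = 0%N by [].
rewrite plus_row [X in _ - X *m _](eq_bigl (fun _ => false)).
  by rewrite big_pred0_eq mul0mx subr0.
by move=> j /=; rewrite k0.
Qed.

Lemma G4 xi (k : 'I_n) : (n <= k + odd k)%N ->
  row k (tn_plus T xi) = - ((\sum_(j < n) row j xi) *m r^T).
Proof. by move=> h; rewrite plus_row psum_full // subt. Qed.

Lemma G5 xi (k : 'I_n) : (n <= k + ~~ odd k)%N ->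
  row k (tn_minus T xi) = - ((\sum_(j < n) row j xi) *m r^T).
Proof. by move=> h; rewrite minus_row psum_full // subt. Qed.

Hypothesis ht : t \in unitmx.
Hypothesis n0 : (0 < n)%N.

Definition Pf (w : 'rV[K]_d) (Z : nat -> 'rV[K]_d) (c : nat) : 'rV[K]_d :=
  if c == 0%N then 0 else if c == n then w else (w *m r - Z c) *m invmx t.

Lemma Pf0 w Z : Pf w Z 0 = 0. Proof. by []. Qed.
Lemma Pfn w Z : Pf w Z n = w.
Proof. by rewrite /Pf eqxx; case: eqP => // h; move: n0; rewrite h. Qed.
Lemma Pfmid w Z c : (0 < c < n)%N -> w *m r - Pf w Z c *m t = Z c.
Proof.
case/andP=> c0 cn; rewrite /Pf; case: eqP => [h|_]; first by rewrite h in c0.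
case: eqP => [h|_]; first by rewrite h ltnn in cn.
by rewrite mulmxKV // opprB addrC subrK.
Qed.

Lemma plus_mk w Z (k : 'I_n) :
  row k (tn_plus T (mkxi n (Pf w Z))) = w *m r - Pf w Z (k + odd k) *m t.
Proof.
rewrite plus_row sum_mkxi // psum_mkxi ?Pfn //.
by have := ltn_ord k; have := leq_b1 (odd k); lia.
Qed.

Lemma minus_mk w Z (k : 'I_n) :
  row k (tn_minus T (mkxi n (Pf w Z))) = w *m r - Pf w Z (k + ~~ odd k) *m t.
Proof.
rewrite minus_row sum_mkxi // psum_mkxi ?Pfn //.
by have := ltn_ord k; have := leq_b1 (~~ odd k); lia.
Qed.

Lemma Pf_end w Z : w *m r - Pf w Z n *m t = - (w *m r^T).
Proof. by rewrite Pfn subt. Qed.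


Lemma EM (ev : ~~ odd n) X : img (tn_minus T) X <-> diag_from 0 X.
Proof.
split.
  by case=> xi -> i j _; rewrite subn0 => oi ji; apply: G1.
move=> D; exists (mkxi n (Pf 0 (rown X))); apply/row_matrixP => k.
rewrite minus_mk; have kn := ltn_ord k; have [q hq] := par k.
have [p hp] := par n; rewrite (negbTE ev) in hp.
case ok: (odd k) hq => hq /=.
  by rewrite addn0 Pfmid ?rownE //; lia.
have h : (k.+1 < n)%N by lia.
rewrite addn1 Pfmid; last by lia.
by rewrite (rownO _ h); apply: D => //; rewrite subn0 ok.
Qed.

Lemma OM (od : odd n) X : img (tn_minus T) X <-> diag_fminus r X.
Proof.
have [p hp] := par n; rewrite od in hp.
split.
  case=> xi ->; split.
    by move=> i j _; rewrite subn0 => oi ji; apply: G1.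
  move=> i hi; exists (\sum_(j < n) row j xi); rewrite G5 //.
  have {}hi : (i : nat) = n.-1 := hi.
  have [q hq] := par i; move: hq; case: (odd i) => /= hq; lia.
case=> D E.
have hn1 : (n.-1 < n)%N by lia.
have [w hw] := E (Ordinal hn1) erefl.
exists (mkxi n (Pf w (rown X))); apply/row_matrixP => k.
rewrite minus_mk; have kn := ltn_ord k; have [q hq] := par k.
case: (eqVneq (k : nat) n.-1) => kl.
  have -> : k = Ordinal hn1 by apply: val_inj.
  rewrite hw /= (_ : odd n.-1 = false) /=; last by move: hq; rewrite kl; case: (odd _) => //=; lia.
  by rewrite addn1 prednK // Pf_end.
case ok: (odd k) hq => hq /=.
  by rewrite addn0 Pfmid ?rownE //; lia.
have h : (k.+1 < n)%N by lia.
rewrite addn1 Pfmid; last by lia.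
by rewrite (rownO _ h); apply: D => //; rewrite subn0 ok.
Qed.

Lemma OP (od : odd n) X : img (tn_plus T) X <-> fplus_diag r X.
Proof.
have [p hp] := par n; rewrite od in hp.
split.
  case=> xi ->; split.
    by move=> i hi; exists (\sum_(j < n) row j xi); rewrite G3.
  move=> i j h1 oi ji; apply: G2 => //.
  have [q hq] := par i; have [q' hq'] := par (i - 1).
  by move: oi hq hq'; case: (odd i); case: (odd (i - 1)) => //= _; lia.
case=> E D.
have [w hw] := E (Ordinal n0) erefl.
exists (mkxi n (Pf w (rown X))); apply/row_matrixP => k.
rewrite plus_mk; have kn := ltn_ord k; have [q hq] := par k.
case: (eqVneq (k : nat) 0%N) => k0.
  have -> : k = Ordinal n0 by apply: val_inj.
  by rewrite hw /= Pf0 mul0mx subr0.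
case ok: (odd k) hq => hq /=.
  have h : (k.+1 < n)%N by lia.
  rewrite addn1 Pfmid; last by lia.
  rewrite (rownO _ h); apply: D => //=; first by lia.
  have [q' hq'] := par (k - 1).
  by move: hq'; case: (odd (k - 1)) => //= hq'; lia.
by rewrite addn0 Pfmid ?rownE //; lia.
Qed.


Definition tau_inv (i : nat) : nat :=
  if i == 0%N then 0%N else if i == 1%N then n.-1 else i.-1.

Lemma tau_idx_lt (k : 'I_n) : (2 <= n)%N -> (tau_idx n k < n)%N.
Proof.
move=> n2; have kn := ltn_ord k; rewrite /tau_idx.
case: eqP => [_|h1]; first by lia.
case: eqP => [_|h2]; lia.
Qed.

Lemma tau_invK (k : 'I_n) : (2 <= n)%N -> tau_inv (tau_idx n k) = k.
Proof.
move=> n2; have kn := ltn_ord k; rewrite /tau_idx.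
case: (eqVneq (k : nat) 0%N) => [->|h1] //=.
case: (eqVneq (k : nat) n.-1) => [->|h2] //=.
rewrite /tau_inv /=; case: eqP => [h|_] //.
by move: h1; case: h => ->.
Qed.

Lemma EP (ev : ~~ odd n) X : img (tn_plus T) X <-> img_on (@tau K d n) (lr_diag r) X.
Proof.
have [p hp] := par n; rewrite (negbTE ev) /= in hp.
have n2 : (2 <= n)%N by lia.
have hn1 : (n.-1 < n)%N by lia.
have h1 : (1 < n)%N by lia.
split.
  case=> xi ->; set X' := tn_plus T xi.
  exists (\matrix_(i < n) rown X' (tau_inv i)); split; last first.
    apply/row_matrixP => k; rewrite [RHS]rowK [RHS]rowK.
    have e : nat_of_ord (insubd k (tau_idx n k)) = tau_idx n k.
      exact: (insubdK k (tau_idx_lt k n2)).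
    by rewrite e tau_invK // rownE.
  split.
    move=> i j i0 j1; exists ((\sum_(j < n) row j xi) *m t).
    rewrite !rowK /tau_inv i0 j1 /= (rownO _ n0) (rownO _ hn1) G3 // G4 /=; last first.
      have [q hq] := par n.-1; move: hq; case: (odd _) => /= hq; lia.
    by rewrite /rflat_plus /rflat_minus /splus /sminus /rdiff_inv /tflip mulmxK.
  move=> i j i2 oi ji; rewrite !rowK /tau_inv.
  have {}ji : (j : nat) = i.+1 := ji.
  rewrite ji /= (_ : ((i : nat) == 0%N) = false); last by apply/negbTE; lia.
  rewrite (_ : ((i : nat) == 1%N) = false); last by apply/negbTE; lia.
  rewrite (_ : (i.+1 == 1%N) = false); last by apply/negbTE; lia.
  have hi : (i.-1 < n)%N by have := ltn_ord i; lia.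
  rewrite (rownO _ hi) rownE; apply: G2 => /=; last by lia.
  have [q hq] := par i.-1; have [q' hq'] := par (i - 2).
  by move: oi hq hq'; case: (odd i.-1); case: (odd (i - 2)) => //= _; lia.
case=> Y [[L D] ->].
have [z [hz1 hz2]] := L (Ordinal n0) (Ordinal h1) erefl erefl.
set w := z *m invmx t.
have e0 : row (Ordinal n0) Y = w *m r by rewrite hz1.
have e1 : row (Ordinal h1) Y = - (w *m r^T) by rewrite hz2.
exists (mkxi n (Pf w (rown Y))); apply/row_matrixP => k.
rewrite plus_mk rowK rown_insubd; last exact: tau_idx_lt.
have kn := ltn_ord k; have [q hq] := par k.
case: (eqVneq (k : nat) 0%N) => k0.
  rewrite /tau_idx k0 /= (rownO _ n0) e0 /=.
  by rewrite Pf0 mul0mx subr0.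
case: (eqVneq (k : nat) n.-1) => kl.
  rewrite /tau_idx (negbTE k0) kl eqxx (rownO _ h1) e1.
  rewrite (_ : odd n.-1 = true) /=; last by move: hq; rewrite kl; case: (odd _) => //=; lia.
  by rewrite addn1 prednK // Pf_end.
rewrite /tau_idx (negbTE k0) (negbTE kl).
case ok: (odd k) hq => hq /=.
  by rewrite addn1 Pfmid //; lia.
have h : (k.+1 < n)%N by lia.
rewrite addn0 Pfmid; last by lia.
rewrite (rownO _ h) rownE; symmetry; apply: D => //=; first by lia.
have [q' hq'] := par (k - 2).
by move: hq'; case: (odd (k - 2)) => //= hq'; lia.
Qed.

End Main.


Set Strict Implicit. Unset Implicit Arguments.

Theorem lemma5p1 (K : fieldType) (d : nat)
    (br : 'rV[K]_d -> 'rV[K]_d -> 'rV[K]_d) (r : 'M[K]_d) (n : nat) :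
  is_lie br -> factorizable br r -> (1 <= n)%N ->
  (forall m : nat, n = (2 * m)%N ->
     (forall X : 'M[K]_(n, d),
        img (tn_plus (rn n r)) X <-> img_on (@tau K d n) (lr_diag r) X) /\
     (forall X : 'M[K]_(n, d),
        img (tn_minus (rn n r)) X <-> diag_from 0 X)) /\
  (forall m : nat, n = (2 * m + 1)%N ->
     (forall X : 'M[K]_(n, d),
        img (tn_plus (rn n r)) X <-> fplus_diag r X) /\
     (forall X : 'M[K]_(n, d),
        img (tn_minus (rn n r)) X <-> diag_fminus r X)).
Proof.
move=> _ [_ ht] n1; split=> m hm.
  have ev : ~~ odd n by rewrite hm mul2n odd_double.
  by split=> X; [exact: (EP ht n1 ev) | exact: (EM ht n1 ev)].
have od : odd n by rewrite hm addn1 /= mul2n odd_double.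
by split=> X; [exact: (OP ht n1 od) | exact: (OM ht n1 od)].
Qed.
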